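(* Let $G$ be a finite group generated by a set $S$ with $1_G\in S$, let $\gamma$ be an irreducible monomial representation of $G$, and let $A\subset G$ be a normal symmetric set such that $2\operatorname{SpecRad}(\widehat{1_A}(\gamma))>\mathbb{P}_G(S\cdot A)$. Then $\gamma$ is one-dimensional.
   Context: A representation is a homomorphism $\gamma:G\to U_n(\mathbb{C})$; it is monomial if it is induced by a one-dimensional representation of some subgroup $H\le G$ (i.e. its character is the induced character $\lambda^G$ of some homomorphism $\lambda:H\to S^1$). $A$ symmetric means $A=A^{-1}$, normal means $xA=Ax$ for all $x\in G$. $\mathbb{P}_G(E)=|E|/|G|$ and $\mathbb{E}_{x\in G}$ is the average over $G$. The Fourier transform is $\widehat{f}(\gamma):=\mathbb{E}_{x\in G}f(x)\gamma(x)$, and $\operatorname{SpecRad}(M)$ is the largest absolute value of an eigenvalue of the matrix $M$. $S\cdot A=\{sa:s\in S,a\in A\}$. *)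

(* Defs.v *)
From HB Require Import structures.
From mathcomp Require Import all_boot all_order all_algebra all_fingroup all_solvable all_field all_character.
Set Implicit Arguments. Unset Strict Implicit. Unset Printing Implicit Defensive.
Import Order.TTheory GRing.Theory Num.Theory.
Local Open Scope ring_scope.

(* Multiset of eigenvalues of a square complex matrix: the roots (with
   multiplicity) of its characteristic polynomial, which splits over algC. *)
Definition eigen_seq (n : nat) (M : 'M[algC]_n) : seq algC :=
  sval (closed_field_poly_normal (char_poly M)).

(* Spectral radius: largest absolute value of an eigenvalue (0 for n = 0). *)
Definition SpecRad (n : nat) (M : 'M[algC]_n) : algC :=
  \big[Num.max/0]_(z <- eigen_seq M) `|z|.

Definition fourier (gT : finGroupType) (G : {group gT}) (n : nat)
  (rG : mx_representation algC G n) (f : gT -> algC) : 'M[algC]_n :=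
  (#|G|%:R)^-1 *: \sum_(x in G) f x *: rG x.

Definition indic (gT : finGroupType) (A : {set gT}) : gT -> algC :=
  fun x => if x \in A then 1 else 0.

Definition unitary_rep (gT : finGroupType) (G : {group gT}) (n : nat)
  (rG : mx_representation algC G n) : Prop :=
  forall x, x \in G -> rG x *m (map_mx (fun z : algC => z^*) (rG x))^T = 1%:M.

Definition monomial_rep (gT : finGroupType) (G : {group gT}) (n : nat)
  (rG : mx_representation algC G n) : Prop :=
  exists H : {group gT}, exists2 lam : 'CF(H),
    H \subset G /\ lam \is a linear_char & cfRepr rG = 'Ind[G] lam.

Definition probG (gT : finGroupType) (G : {group gT}) (E : {set gT}) : algC :=
  #|E|%:R / #|G|%:R.

(* Main.v *)
Require Import Defs.
From HB Require Import structures.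
From mathcomp Require Import all_boot all_order all_algebra all_fingroup all_solvable all_field all_character.
Import Order.TTheory GRing.Theory Num.Theory.
Local Open Scope ring_scope.

Section Aux.
Implicit Types (dummy : unit).
Variable gT : finGroupType.

Lemma conjA_eq (G : {group gT}) (A : {set gT}) :
  A \subset G -> (forall x, x \in G -> (x *: A)%g = (A :* x)%g) ->
  forall y, y \in G -> (A :^ y)%g = A.
Proof.
move=> sAG nA y Gy; apply/eqP; rewrite eqEcard cardJg leqnn andbT.
apply/subsetP=> z /imsetP[a Aa ->].
have : (y^-1 * a)%g \in (y^-1 *: A)%g by rewrite mem_lcoset mulKg.
rewrite nA ?groupV // => /rcosetP[a' Aa' e].
by rewrite /conjg mulgA e mulgKV.
Qed.

Lemma sum_conj (A : {set gT}) (V : nmodType) (f : gT -> V) y :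
  (A :^ y)%g = A -> \sum_(a in A) f (a ^ y)%g = \sum_(a in A) f a.
Proof.
move=> AyA; rewrite [RHS](reindex_inj (@conjg_inj _ y)) /=.
by apply: eq_bigl => a; rewrite -{2}AyA memJ_conjg.
Qed.

Lemma SpecRad_scalar n (d : algC) : SpecRad (d%:M : 'M_n) <= `|d|.
Proof.
rewrite /SpecRad /eigen_seq; case: closed_field_poly_normal => r /= Er.
rewrite big_seq; apply: (big_rec (fun m => m <= `|d|)) => // z m zr le_m.
have rz : root (char_poly (d%:M : 'M_n)) z.
  by rewrite Er (monicP (char_poly_monic _)) scale1r root_prod_XsubC.
move: rz; rewrite -eigenvalue_root_char => /eigenvalueP[v vE vnz].
have dz : d = z.
  move: vE; rewrite mul_mx_scalar => /eqP; rewrite -subr_eq0 -scalerBl.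
  by rewrite scaler_eq0 (negbTE vnz) orbF subr_eq0 => /eqP.
rewrite -dz /Num.max; by case: ifP.
Qed.
End Aux.

Theorem lemma6p2 (gT : finGroupType) (G : {group gT}) (S A : {set gT})
  (n : nat) (rG : mx_representation algC G n) :
  S \subset G -> <<S>>%g = G -> (1%g \in S) ->
  unitary_rep rG -> mx_irreducible rG -> monomial_rep rG ->
  A \subset G -> (A^-1)%g = A -> (forall x, x \in G -> (x *: A)%g = (A :* x)%g) ->
  probG G (S * A)%g < 2 * SpecRad (fourier rG (indic A)) ->
  n = 1%N.
Proof.
move=> sSG genS S1 _ irrG [H [lam [sHG linlam] chiE]] sAG _ nA hyp.
have AJ := @conjA_eq _ G A sAG nA.
pose F := \sum_(a in A) rG a.
have FE : fourier rG (indic A) = (#|G|%:R)^-1 *: F.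
  rewrite /fourier /F; congr (_ *: _).
  rewrite (big_setID A) /= (setIidPr sAG) [X in _ + X]big1 ?addr0.
    by apply: eq_bigr => a Aa; rewrite /indic Aa scale1r.
  by move=> x /setDP[_ /negbTE nAx]; rewrite /indic nAx scale0r.
have Fcent : centgmx rG F.
  apply/centgmxP=> x Gx.
  rewrite /F mulmx_suml mulmx_sumr.
  rewrite -(@sum_conj _ _ _ (fun a => rG a *m rG x) _ (AJ _ (groupVr Gx))).
  apply: eq_bigr => a Aa; have Ga := subsetP sAG a Aa.
  rewrite -!repr_mxM ?groupJ ?groupV //; congr (rG _).
  by rewrite /conjg invgK !mulgA mulgKV.
have /is_scalar_mxP[c Fc] :=
  mx_abs_irr_cent_scalar (@group_closure_closed_field _ _ _ _ _ irrG) Fcent.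
pose L := \sum_(a in A) lam a.
have n1 : n%:R = #|G:H|%g%:R :> algC.
  by rewrite -(cfRepr1 rG) chiE cfInd1 // lin_char1 // mulr1.
have Hpos : (#|H|%:R : algC) != 0 by rewrite pnatr_eq0 -lt0n cardG_gt0.
have trF : \tr F = #|G:H|%g%:R * L.
  rewrite /F raddf_sum /=.
  transitivity (\sum_(a in A) 'Ind[G] lam a).
    apply: eq_bigr => a Aa; have Ga := subsetP sAG a Aa.
    by rewrite -chiE cfunE Ga mulr1n.
  transitivity (\sum_(a in A) #|H|%:R^-1 * \sum_(y in G) lam (a ^ y)%g).
    by apply: eq_bigr => a _; rewrite cfIndE.
  rewrite -mulr_sumr exchange_big /=.
  transitivity (#|H|%:R^-1 * \sum_(y in G) L).
    by congr (_ * _); apply: eq_bigr => y Gy; rewrite (@sum_conj _ _ _ (fun a => lam a) _ (AJ _ Gy)).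
  rewrite sumr_const -(Lagrange sHG).
  by rewrite -[L *+ _]mulr_natl natrM -mulrA mulKf.
have iGH : (#|G:H|%g%:R : algC) != 0 by rewrite pnatr_eq0 -lt0n indexg_gt0.
have cL : c = L.
  apply: (mulIf iGH); rewrite [RHS]mulrC -trF Fc mxtrace_scalar.
  by rewrite -[RHS]mulr_natr n1.
have Lb : `|L| <= #|A :&: H|%:R.
  apply: le_trans (ler_norm_sum _ _ _) _.
  rewrite (big_setID H) /= [X in _ + X]big1 ?addr0.
    rewrite -sum1_card natr_sum; apply: ler_sum => a /setIP[_ Ha].
    by rewrite normC_lin_char.
  by move=> a /setDP[_ nHa]; rewrite cfun0 ?normr0.
have GP : (0 : algC) < #|G|%:R by rewrite ltr0n cardG_gt0.
have SRb : SpecRad (fourier rG (indic A)) <= #|A :&: H|%:R / #|G|%:R.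
  rewrite FE Fc scale_scalar_mx; apply: le_trans (SpecRad_scalar _ _) _.
  rewrite normrM normfV normr_nat mulrC cL ler_pM2r //.
  by rewrite invr_gt0.
have [sSH | ] := boolP (S \subset H).
  apply/eqP; rewrite -eqC_nat n1 eqC_nat indexg_eq1 -genS.
  by rewrite gen_subG.
case/subsetPn => s Ss nHs.
pose B := A :&: H.
have I0 : B :&: (s *: B)%g = set0.
  apply/setP => x; rewrite inE in_set0; apply/negbTE; apply/negP.
  case/andP=> /setIP[_ Hx] /lcosetP[b /setIP[_ Hb] xe].
  rewrite xe in Hx; have := groupM Hx (groupVr Hb); rewrite mulgK => Hs.
  by rewrite Hs in nHs.
have sU : B :|: (s *: B)%g \subset (S * A)%g.
  rewrite subUset; apply/andP; split; apply/subsetP => x.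
    by case/setIP => Ax _; rewrite -[x]mul1g mem_mulg.
  by case/lcosetP => b /setIP[Ab _] ->; rewrite mem_mulg.
have cardB : (2 * #|B| <= #|(S * A)%g|)%N.
  have E : #|B :|: (s *: B)%g| = (#|B| + #|B|)%N.
    by have := cardsUI B (s *: B)%g; rewrite I0 cards0 addn0 card_lcoset.
  by rewrite mul2n -addnn -E subset_leq_card.
have : 2 * SpecRad (fourier rG (indic A)) <= probG G (S * A)%g.
  apply: le_trans (_ : 2 * (#|B|%:R / #|G|%:R) <= _).
    by rewrite ler_pM2l // ltr0n.
  rewrite /probG mulrA ler_pM2r ?invr_gt0 // -natrM ler_nat.
  exact: cardB.
by move=> le; have := lt_le_trans hyp le; rewrite ltxx.
Qed.
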